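(* Let $(X,d)$ be a complete Busemann convex geodesic metric space which is uniformly convex with a modulus of uniform convexity $\delta_X$ that is monotone or lower semicontinuous from the right. Let $(A,B)$ be a closed convex pair of subsets of $X$ with $B$ bounded, and let $T:A\cup B\to A\cup B$ be a noncyclic relatively nonexpansive mapping. Let $$A_0=\{x\in A : d(x,y')=\operatorname{dist}(A,B)\text{ for some } y'\in B\},$$ let $x_0\in A_0$ and define $x_{n+1}=\tfrac{x_n+Tx_n}{2}$ (the midpoint of $x_n$ and $Tx_n$) for every $n\ge 0$. Then $\lim_{n\to\infty} d(x_n,Tx_n)=0$. Moreover, if $T(A)\subseteq C$ for some compact set $C\subseteq X$, then $\{x_n\}$ converges to a fixed point of $T$.
   Context: $\operatorname{dist}(A,B)=\inf\{d(x,y):x\in A,y\in B\}$. A geodesic space is one in which any two points are joined by a geodesic segment; a subset is convex if it contains every geodesic segment joining two of its points. $X$ is Busemann convex if for any geodesics $c_1:[0,l_1]\to X$, $c_2:[0,l_2]\to X$, $d(c_1(tl_1),c_2(tl_2))\le (1-t)d(c_1(0),c_2(0))+t\,d(c_1(l_1),c_2(l_2))$ for all $t\in[0,1]$; such spaces are uniquely geodesic, so the midpoint $\tfrac{x+y}{2}$ (the point $m$ with $d(x,m)=d(m,y)=d(x,y)/2$) is unique. $X$ is uniformly convex if for every $r>0$ and $\varepsilon\in(0,2]$ there is $\delta\in(0,1]$ such that for all $a,x,y$ with $d(x,a)\le r$, $d(y,a)\le r$, $d(x,y)\ge\varepsilon r$, the midpoint $m$ of $x,y$ satisfies $d(m,a)\le(1-\delta)r$;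 a function $\delta_X(r,\varepsilon)$ providing such $\delta$ is a modulus of uniform convexity; it is monotone if it is decreasing in $r$ for each fixed $\varepsilon$, and lower semicontinuous from the right if it is lower semicontinuous from the right in $r$ for each fixed $\varepsilon$. $T$ is relatively nonexpansive if $d(Tx,Ty)\le d(x,y)$ for all $x\in A$, $y\in B$, and noncyclic if $T(A)\subseteq A$, $T(B)\subseteq B$. *)

(* Defs.v *)
From Stdlib Require Import Reals.
Open Scope R_scope.

Section MetricDefs.
Context {X : Type} (d : X -> X -> R).

Definition is_metric : Prop :=
  (forall x y, 0 <= d x y) /\ (forall x y, d x y = 0 <-> x = y) /\
  (forall x y, d x y = d y x) /\ (forall x y z, d x z <= d x y + d y z).

Definition is_geodesic (c : R -> X) (l : R) : Prop :=
  0 <= l /\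
  forall s t, 0 <= s <= l -> 0 <= t <= l -> d (c s) (c t) = Rabs (s - t).

Definition geodesic_space : Prop :=
  forall x y, exists c, is_geodesic c (d x y) /\ c 0 = x /\ c (d x y) = y.

Definition convex_set (A : X -> Prop) : Prop :=
  forall x y (c : R -> X) l, A x -> A y -> is_geodesic c l -> c 0 = x -> c l = y ->
    forall t, 0 <= t <= l -> A (c t).

Definition busemann_convex : Prop :=
  forall (c1 c2 : R -> X) l1 l2, is_geodesic c1 l1 -> is_geodesic c2 l2 ->
    forall t, 0 <= t <= 1 ->
      d (c1 (t * l1)) (c2 (t * l2)) <= (1 - t) * d (c1 0) (c2 0) + t * d (c1 l1) (c2 l2).

Definition is_midpoint (x y m : X) : Prop :=
  d x m = d x y / 2 /\ d m y = d x y / 2.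

Definition modulus_uc (delta : R -> R -> R) : Prop :=
  forall r eps, 0 < r -> 0 < eps <= 2 ->
    0 < delta r eps <= 1 /\
    forall a x y m, d x a <= r -> d y a <= r -> d x y >= eps * r -> is_midpoint x y m ->
      d m a <= (1 - delta r eps) * r.

Definition uniformly_convex : Prop :=
  forall r eps, 0 < r -> 0 < eps <= 2 -> exists delta, 0 < delta <= 1 /\
    forall a x y m, d x a <= r -> d y a <= r -> d x y >= eps * r -> is_midpoint x y m ->
      d m a <= (1 - delta) * r.

Definition modulus_monotone (delta : R -> R -> R) : Prop :=
  forall eps, 0 < eps <= 2 -> forall r1 r2, 0 < r1 -> r1 <= r2 -> delta r2 eps <= delta r1 eps.

Definition modulus_lsc_right (delta : R -> R -> R) : Prop :=
  forall eps, 0 < eps <= 2 -> forall r, 0 < r -> forall eta, 0 < eta ->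
    exists gam, 0 < gam /\ forall s, r <= s < r + gam -> delta r eps - eta < delta s eps.

Definition mcauchy_seq (u : nat -> X) : Prop :=
  forall eps, 0 < eps -> exists N, forall n m, (n >= N)%nat -> (m >= N)%nat -> d (u n) (u m) < eps.

Definition seq_converges_to (u : nat -> X) (p : X) : Prop :=
  forall eps, 0 < eps -> exists N, forall n, (n >= N)%nat -> d (u n) p < eps.

Definition mcomplete : Prop :=
  forall u, mcauchy_seq u -> exists p, seq_converges_to u p.

Definition mopen_set (U : X -> Prop) : Prop :=
  forall x, U x -> exists e, 0 < e /\ forall y, d x y < e -> U y.

Definition mclosed_set (A : X -> Prop) : Prop :=
  mopen_set (fun x => ~ A x).

Definition mbounded_set (A : X -> Prop) : Prop :=
  exists x0 r, forall y, A y -> d x0 y <= r.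

Definition mcompact_set (C : X -> Prop) : Prop :=
  forall (I : Type) (U : I -> X -> Prop), (forall i, mopen_set (U i)) ->
    (forall x, C x -> exists i, U i x) ->
    exists l : list I, forall x, C x -> exists i, List.In i l /\ U i x.

Definition is_dist (A B : X -> Prop) (D : R) : Prop :=
  (forall x y, A x -> B y -> D <= d x y) /\
  (forall D', (forall x y, A x -> B y -> D' <= d x y) -> D' <= D).

Definition A0_set (A B : X -> Prop) (D : R) (x : X) : Prop :=
  A x /\ exists y', B y' /\ d x y' = D.

Definition noncyclic (A B : X -> Prop) (T : X -> X) : Prop :=
  (forall x, A x -> A (T x)) /\ (forall y, B y -> B (T y)).

Definition rel_nonexpansive (A B : X -> Prop) (T : X -> X) : Prop :=
  forall x y, A x -> B y -> d (T x) (T y) <= d x y.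

End MetricDefs.

(* Main.v *)
Require Import Defs.
From Stdlib Require Import Reals Lra Lia ZArith ClassicalEpsilon Classical.
From Coquelicot Require Import Rbar Lim_seq.
Open Scope R_scope.

Lemma inf_ex (E : R -> Prop) : (exists r, E r) -> (forall r, E r -> 0 <= r) ->
  exists L, 0 <= L /\ (forall r, E r -> L <= r) /\
    (forall eta, 0 < eta -> exists r, E r /\ r < L + eta).
Proof.
  intros [r0 Hr0] Hpos.
  destruct (completeness (fun s => E (- s))) as [m [Hub Hl]].
  { exists 0. intros s Hs. apply Hpos in Hs. lra. }
  { exists (- r0). now rewrite Ropp_involutive. }
  exists (- m). split; [|split].
  - assert (m <= 0). { apply Hl. intros s Hs. apply Hpos in Hs. lra. } lra.
  - intros r Hr. assert (r' : - r <= m). { apply Hub. now rewrite Ropp_involutive. } lra.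
  - intros eta He. apply NNPP. intro Hn.
    assert (m <= m - eta). {
      apply Hl. intros s Hs. destruct (Rle_lt_dec s (m - eta)) as [|Hlt]; [lra|].
      exfalso. apply Hn. exists (- s). split; [exact Hs|lra]. }
    lra.
Qed.

Lemma dec_lim (s : nat -> R) : (forall n, 0 <= s n) -> (forall n, s (S n) <= s n) ->
  exists L, 0 <= L /\ (forall n, L <= s n) /\
   forall eta, 0 < eta -> exists N, forall n, (N <= n)%nat -> s n < L + eta.
Proof.
  intros Hp Hd.
  assert (Hmon : forall N n, (N <= n)%nat -> s n <= s N).
  { intros N n Hn. induction Hn; [lra|]. specialize (Hd m). lra. }
  destruct (inf_ex (fun r => exists n, r = s n)) as [L [HL0 [Hlb Hinf]]].
  { exists (s 0%nat), 0%nat; reflexivity. } { intros r [n ->]. apply Hp. }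
  exists L. split; [auto|split].
  - intro n. apply Hlb. eauto.
  - intros eta He. destruct (Hinf eta He) as [r [[N ->] HN]]. exists N.
    intros n Hn. specialize (Hmon N n Hn). lra.
Qed.

Lemma mono_dec (s : nat -> R) : (forall n, s (S n) <= s n) ->
  forall N n, (N <= n)%nat -> s n <= s N.
Proof. intros Hd N n Hn. induction Hn; [lra|]. specialize (Hd m). lra. Qed.

Section Metric.
Variables (X : Type) (d : X -> X -> R).
Hypothesis Hm : is_metric d.

Lemma d_pos x y : 0 <= d x y. Proof. apply Hm. Qed.
Lemma d_sym x y : d x y = d y x. Proof. apply Hm. Qed.
Lemma d_tri x y z : d x z <= d x y + d y z. Proof. apply Hm. Qed.
Lemma d_xx x : d x x = 0. Proof. apply Hm. reflexivity. Qed.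
Lemma d_eq x y : d x y = 0 -> x = y. Proof. apply Hm. Qed.

Variable delta : R -> R -> R.
Hypothesis Hg : geodesic_space d.
Hypothesis Huc : modulus_uc d delta.
Hypothesis Hbus : busemann_convex d.
Hypothesis Hmod : modulus_monotone delta \/ modulus_lsc_right delta.

Lemma mid_unique (a b m m' : X) :
  is_midpoint d a b m -> is_midpoint d a b m' -> m = m'.
Proof.
  intros [H1 H2] [H3 H4].
  destruct (Req_dec (d a b) 0) as [E|E].
  { apply d_eq in E; subst b.
    assert (d a m = 0) by (rewrite H1, d_xx; lra).
    assert (d a m' = 0) by (rewrite H3, d_xx; lra).
    apply d_eq in H. apply d_eq in H0. congruence. }
  destruct (Req_dec (d m m') 0) as [E2|E2]; [now apply d_eq|].
  exfalso.
  set (r := d a b / 2).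
  assert (Hr : 0 < r) by (pose proof (d_pos a b); unfold r; lra).
  assert (Hmm : 0 < d m m') by (pose proof (d_pos m m'); lra).
  assert (Hle : d m m' <= 2 * r).
  { pose proof (d_tri m a m'). rewrite (d_sym m a) in H. unfold r in *. lra. }
  set (e := d m m' / r).
  assert (He : 0 < e <= 2).
  { unfold e; split. apply Rdiv_lt_0_compat; lra.
    apply (Rmult_le_reg_r r); [lra|]. unfold Rdiv; rewrite Rmult_assoc, Rinv_l; lra. }
  assert (Her : e * r = d m m') by (unfold e; field; lra).
  destruct (Hg m m') as [c [[Hl Hc] [Hc0 HcL]]].
  set (mm := c (d m m' / 2)).
  assert (Hmid : is_midpoint d m m' mm).
  { unfold is_midpoint, mm. split.
    - rewrite <- Hc0 at 1. rewrite Hc; try lra.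
      rewrite Rabs_left1; lra.
    - rewrite <- HcL at 2. rewrite Hc; try lra.
      rewrite Rabs_left1; lra. }
  destruct (Huc r e Hr He) as [[Hd0 Hd1] Hprop].
  assert (A1 : d mm a <= (1 - delta r e) * r).
  { apply Hprop with m m'; try lra; try exact Hmid.
    - rewrite d_sym, H1; unfold r; lra.
    - rewrite d_sym, H3; unfold r; lra. }
  assert (A2 : d mm b <= (1 - delta r e) * r).
  { apply Hprop with m m'; try lra; try exact Hmid.
    - rewrite H2; unfold r; lra.
    - rewrite H4; unfold r; lra. }
  pose proof (d_tri a mm b). rewrite (d_sym a mm) in H.
  assert (d a b = 2 * r) by (unfold r; lra).
  nra.
Qed.

Lemma geo_mid (a b : X) : exists c, is_geodesic d c (d a b) /\ c 0 = a /\ c (d a b) = b /\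
   is_midpoint d a b (c (d a b / 2)).
Proof.
  destruct (Hg a b) as [c [[Hl Hc] [Hc0 HcL]]].
  exists c. repeat split; auto.
  - rewrite <- Hc0 at 1. rewrite Hc; try lra. rewrite Rabs_left1; lra.
  - rewrite <- HcL at 2. rewrite Hc; try lra. rewrite Rabs_left1; lra.
Qed.

Lemma mid_ex (a b : X) : exists m, is_midpoint d a b m.
Proof. destruct (geo_mid a b) as [c [_ [_ [_ H]]]]. eauto. Qed.

Lemma mid_convex (S : X -> Prop) a b m : convex_set d S -> S a -> S b ->
  is_midpoint d a b m -> S m.
Proof.
  intros HS Ha Hb Hmid.
  destruct (geo_mid a b) as [c [Hc [Hc0 [HcL Hm2]]]].
  rewrite (mid_unique _ _ _ _ Hmid Hm2).
  apply (HS a b c (d a b)); auto. pose proof (d_pos a b); lra.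
Qed.

Lemma mid_bus a b m a' b' m' : is_midpoint d a b m -> is_midpoint d a' b' m' ->
  d m m' <= / 2 * d a a' + / 2 * d b b'.
Proof.
  intros H1 H2.
  destruct (geo_mid a b) as [c1 [G1 [G10 [G1L G1m]]]].
  destruct (geo_mid a' b') as [c2 [G2 [G20 [G2L G2m]]]].
  pose proof (Hbus c1 c2 (d a b) (d a' b') G1 G2 (/2)) as Hb.
  rewrite (mid_unique _ _ _ _ H1 G1m), (mid_unique _ _ _ _ H2 G2m).
  replace (d a b / 2) with (/2 * d a b) by lra.
  replace (d a' b' / 2) with (/2 * d a' b') by lra.
  rewrite G10, G20, G1L, G2L in Hb.
  replace (1 - /2) with (/2) in Hb by lra. apply Hb. lra.
Qed.

Lemma mid_pt a b m q : is_midpoint d a b m -> d m q <= / 2 * d a q + / 2 * d b q.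
Proof.
  intro H. apply (mid_bus a b m q q q H). split; rewrite d_xx; lra.
Qed.

Lemma uc_key (R0 eps : R) : 0 < R0 -> 0 < eps -> exists eta kappa, 0 < eta /\ 0 < kappa /\
  forall a x y m, d x a <= R0 + eta -> d y a <= R0 + eta -> eps <= d x y ->
   is_midpoint d x y m -> d m a <= R0 - kappa.
Proof.
  intros HR He.
  set (e := Rmin (eps / (R0 + 1)) 2).
  assert (Hepos : 0 < eps / (R0+1)) by (apply Rdiv_lt_0_compat; lra).
  assert (He0 : 0 < e <= 2).
  { unfold e; split; [apply Rmin_glb_lt; lra | apply Rmin_r]. }
  assert (Hee : e * (R0 + 1) <= eps).
  { unfold e. apply Rle_trans with (eps / (R0 + 1) * (R0 + 1)).
    apply Rmult_le_compat_r; [lra| apply Rmin_l]. right; field; lra. }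
  assert (Hgen : exists d0 eta, 0 < d0 <= 1 /\ 0 < eta <= 1 /\ eta <= d0 * R0 / 2 /\
             d0 <= delta (R0 + eta) e).
  { destruct Hmod as [Hmon | Hlsc].
    - destruct (Huc (R0 + 1) e ltac:(lra) He0) as [[Hd0 Hd1] _].
      exists (delta (R0+1) e), (Rmin 1 (delta (R0+1) e * R0 / 2)).
      assert (0 < delta (R0 + 1) e * R0 / 2) by (apply Rdiv_lt_0_compat; [nra|lra]).
      repeat split; try lra.
      + apply Rmin_glb_lt; lra.
      + apply Rmin_l.
      + apply Rmin_r.
      + apply Hmon; [lra| |]. 
        pose proof (Rmin_glb_lt 1 (delta (R0+1) e * R0 / 2) 0 ltac:(lra) H). lra.
        pose proof (Rmin_l 1 (delta (R0+1) e * R0 / 2)). lra.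
    - destruct (Huc R0 e HR He0) as [[Hd0 Hd1] _].
      destruct (Hlsc e He0 R0 HR (delta R0 e / 2) ltac:(lra)) as [gam [Hgam Hs]].
      set (eta := Rmin 1 (Rmin (gam / 2) (delta R0 e * R0 / 4))).
      assert (0 < delta R0 e * R0 / 4) by (apply Rdiv_lt_0_compat; [nra|lra]).
      assert (Heta : 0 < eta) by (unfold eta; repeat apply Rmin_glb_lt; lra).
      assert (Heta1 : eta <= 1) by apply Rmin_l.
      assert (Heta2 : eta <= gam / 2) by (unfold eta; eapply Rle_trans; [apply Rmin_r| apply Rmin_l]).
      assert (Heta3 : eta <= delta R0 e * R0 / 4) by (unfold eta; eapply Rle_trans; [apply Rmin_r| apply Rmin_r]).
      exists (delta R0 e / 2), eta. repeat split; try lra.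
      specialize (Hs (R0 + eta) ltac:(lra)). lra. }
  destruct Hgen as [d0 [eta [Hd0 [Heta [Hed Hdd]]]]].
  exists eta, (R0 - (1 - d0) * (R0 + eta)). split; [lra|split].
  - nra.
  - intros a x y m Hx Hy Hxy Hmid.
    destruct (Huc (R0 + eta) e ltac:(lra) He0) as [_ Hp].
    pose proof (Hp a x y m Hx Hy ltac:(nra) Hmid). nra.
Qed.


Lemma le_eps (u v : R) : (forall eta, 0 < eta -> u <= v + eta) -> u <= v.
Proof.
  intros H. destruct (Rle_lt_dec u v) as [|Hlt]; [lra|].
  specialize (H ((u - v)/2) ltac:(lra)). lra.
Qed.

Definition bnd (a : nat -> X) := exists b0 K, forall n, d (a n) b0 <= K.

Definition phi (a : nat -> X) (z : X) : R :=
  match proj1_sig (ex_LimSup_seq (fun n => d (a n) z)) with Finite l => l | _ => 0 end.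

Lemma phi_P a z : bnd a ->
  (forall eta, 0 < eta -> exists N, forall n, (N <= n)%nat -> d (a n) z < phi a z + eta) /\
  (forall eta, 0 < eta -> forall N, exists n, (N <= n)%nat /\ phi a z - eta < d (a n) z).
Proof.
  intros [b0 [K HK]]. unfold phi.
  destruct (ex_LimSup_seq (fun n => d (a n) z)) as [l Hl]; simpl.
  destruct l as [l| |]; simpl in Hl.
  - split.
    + intros eta He. destruct (Hl (mkposreal eta He)) as [_ [N HN]]. exists N. apply HN.
    + intros eta He N. destruct (Hl (mkposreal eta He)) as [H _]. apply H.
  - exfalso. destruct (Hl (K + d b0 z) 0%nat) as [n [_ Hn]].
    pose proof (d_tri (a n) b0 z). pose proof (HK n). lra.
  - exfalso. destruct (Hl 0) as [N HN]. specialize (HN N (le_n N)).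
    pose proof (d_pos (a N) z). lra.
Qed.

Lemma phi_nonneg a z : bnd a -> 0 <= phi a z.
Proof.
  intro Hb. destruct (phi_P a z Hb) as [P1 _].
  apply le_eps. intros eta He. destruct (P1 eta He) as [N HN].
  specialize (HN N (le_n N)). pose proof (d_pos (a N) z). lra.
Qed.

Lemma freq_ev (P Q : nat -> Prop) : (forall N, exists n, (N <= n)%nat /\ P n) ->
  (exists N, forall n, (N <= n)%nat -> Q n) -> forall N, exists n, (N <= n)%nat /\ P n /\ Q n.
Proof.
  intros HP [N0 HQ] N. destruct (HP (max N N0)) as [n [Hn HPn]].
  exists n. split; [lia|]. split; auto. apply HQ. lia.
Qed.

Lemma phi_lip a z w : bnd a -> phi a z <= phi a w + d z w.
Proof.
  intro Hb. destruct (phi_P a z Hb) as [_ P2]. destruct (phi_P a w Hb) as [P1 _].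
  apply le_eps. intros eta He.
  destruct (freq_ev _ _ (P2 (eta/2) ltac:(lra)) (P1 (eta/2) ltac:(lra)) 0%nat) as [n [_ [H1 H2]]].
  pose proof (d_tri (a n) w z). rewrite (d_sym w z) in H. lra.
Qed.

Lemma acenter a (S : X -> Prop) : bnd a -> mcomplete d -> mclosed_set d S -> convex_set d S ->
  (exists s, S s) ->
  exists z, S z /\ (forall w, S w -> phi a z <= phi a w) /\
     (forall w, S w -> phi a w <= phi a z -> w = z).
Proof.
  intros Hb Hc Hcl Hcv Hne.
  destruct (inf_ex (fun r => exists w, S w /\ r = phi a w)) as [L [HL0 [HLlb HLinf]]].
  { destruct Hne as [s Hs]. eauto. }
  { intros r [w [_ ->]]. now apply phi_nonneg. }
  assert (Hlb : forall w, S w -> L <= phi a w) by (intros w Hw; apply HLlb; eauto).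
  assert (Hcau : forall eps, 0 < eps -> exists eta, 0 < eta /\ forall w1 w2, S w1 -> S w2 ->
           phi a w1 < L + eta -> phi a w2 < L + eta -> d w1 w2 < eps).
  { intros eps He. destruct (Rlt_le_dec 0 L) as [HLp|HLz].
    - destruct (uc_key L eps HLp He) as [eta0 [kap [He0 [Hk Hkey]]]].
      exists (eta0/2). split; [lra|]. intros w1 w2 S1 S2 P1 P2.
      destruct (Rlt_le_dec (d w1 w2) eps) as [|Hge]; [auto|exfalso].
      destruct (mid_ex w1 w2) as [m Hmid].
      assert (Sm : S m) by exact (mid_convex S w1 w2 m Hcv S1 S2 Hmid).
      destruct (phi_P a w1 Hb) as [Q1 _]. destruct (phi_P a w2 Hb) as [Q2 _].
      destruct (phi_P a m Hb) as [_ Q3].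
      destruct (Q1 (eta0/2) ltac:(lra)) as [N1 HN1].
      destruct (Q2 (eta0/2) ltac:(lra)) as [N2 HN2].
      destruct (Q3 (kap/2) ltac:(lra) (max N1 N2)) as [n [Hn Hlt]].
      specialize (HN1 n ltac:(lia)). specialize (HN2 n ltac:(lia)).
      assert (d m (a n) <= L - kap).
      { apply (Hkey (a n) w1 w2 m); auto; rewrite d_sym; lra. }
      rewrite d_sym in H. specialize (Hlb m Sm). lra.
    - assert (L = 0) by lra. subst L.
      exists (eps/3). split; [lra|]. intros w1 w2 S1 S2 P1 P2.
      destruct (phi_P a w1 Hb) as [Q1 _]. destruct (phi_P a w2 Hb) as [Q2 _].
      destruct (Q1 (eps/6) ltac:(lra)) as [N1 HN1].
      destruct (Q2 (eps/6) ltac:(lra)) as [N2 HN2].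
      specialize (HN1 (max N1 N2) ltac:(lia)). specialize (HN2 (max N1 N2) ltac:(lia)).
      pose proof (d_tri w1 (a (max N1 N2)) w2). rewrite (d_sym w1 (a _)) in H. lra. }
  assert (Hseq : forall k : nat, exists w, S w /\ phi a w < L + / INR (Datatypes.S k)).
  { intro k. assert (0 < / INR (Datatypes.S k)) by (apply Rinv_0_lt_compat, lt_0_INR; lia).
    destruct (HLinf _ H) as [r [[w [Sw ->]] Hr]]. eauto. }
  set (ws := fun k => proj1_sig (constructive_indefinite_description _ (Hseq k))).
  assert (Hws : forall k, S (ws k) /\ phi a (ws k) < L + / INR (Datatypes.S k)).
  { intro k. unfold ws. apply (proj2_sig (constructive_indefinite_description _ (Hseq k))). }
  assert (Hsmall : forall eta, 0 < eta -> exists N, forall k, (N <= k)%nat -> phi a (ws k) < L + eta).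
  { intros eta He. destruct (archimed (/ eta)) as [Har _].
    assert (Hup : (0 <= up (/eta))%Z).
    { apply le_IZR. pose proof (Rinv_0_lt_compat eta He). simpl; lra. }
    exists (Z.to_nat (up (/ eta))). intros k Hk.
    destruct (Hws k) as [_ Hk2]. eapply Rlt_le_trans; [exact Hk2|].
    apply Rplus_le_compat_l.
    assert (HI : / eta < INR (Datatypes.S k)).
    { rewrite S_INR. apply le_INR in Hk. rewrite INR_IZR_INZ, Z2Nat.id in Hk by exact Hup. lra. }
    assert (0 < INR (Datatypes.S k)) by (apply lt_0_INR; lia).
    apply Rlt_le. rewrite <- (Rinv_inv eta). apply Rinv_lt_contravar; [|exact HI].
    apply Rmult_lt_0_compat; [apply Rinv_0_lt_compat|]; lra. }
  assert (Hcs : mcauchy_seq d ws).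
  { intros eps He. destruct (Hcau eps He) as [eta [Heta Hc2]].
    destruct (Hsmall eta Heta) as [N HN]. exists N. intros n m Hn Hm'.
    apply Hc2; try apply Hws; auto. }
  destruct (Hc ws Hcs) as [z Hz].
  assert (Sz : S z).
  { apply NNPP. intro Hn. destruct (Hcl z Hn) as [e [He Hball]].
    destruct (Hz e He) as [N HN]. apply (Hball (ws N)).
    - rewrite d_sym. apply HN. lia.
    - apply Hws. }
  assert (Hzmin : phi a z <= L).
  { apply le_eps. intros eta He.
    destruct (Hsmall (eta/2) ltac:(lra)) as [N1 HN1].
    destruct (Hz (eta/2) ltac:(lra)) as [N2 HN2].
    pose proof (phi_lip a z (ws (max N1 N2)) Hb).
    specialize (HN1 (max N1 N2) ltac:(lia)). specialize (HN2 (max N1 N2) ltac:(lia)).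
    rewrite d_sym in HN2. lra. }
  exists z. split; [exact Sz|split].
  - intros w Sw. specialize (Hlb w Sw). lra.
  - intros w Sw Hw. apply d_eq. apply Rle_antisym; [|apply d_pos].
    apply le_eps. intros eps He. rewrite Rplus_0_l.
    destruct (Hcau eps He) as [eta [Heta Hc2]]. left. apply Hc2; auto; lra.
Qed.

Lemma fixB (A B : X -> Prop) (T : X -> X) (a0 : X) :
  mcomplete d -> mclosed_set d B -> convex_set d B -> mbounded_set d B ->
  noncyclic A B T -> rel_nonexpansive d A B T -> A a0 -> (exists b, B b) ->
  exists q, B q /\ T q = q.
Proof.
  intros Hc Bcl Bcv [c0 [rr Hrr]] [TA TB] Hrn Ha0 [y0 By0].
  set (orb := fun n => Nat.iter n T a0).
  set (orbY := fun n => Nat.iter n T y0).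
  assert (oA : forall n, A (orb n)) by (induction n; simpl; auto).
  assert (oB : forall n, B (orbY n)) by (induction n; simpl; auto).
  assert (oD : forall n, d (orb n) (orbY n) <= d a0 y0).
  { induction n; [simpl; lra|]. simpl.
    pose proof (Hrn _ _ (oA n) (oB n)). unfold orb, orbY in *. lra. }
  assert (Hb : bnd orb).
  { exists c0, (d a0 y0 + rr). intro n.
    pose proof (d_tri (orb n) (orbY n) c0). pose proof (Hrr _ (oB n)).
    rewrite (d_sym c0) in H0. pose proof (oD n). lra. }
  destruct (acenter orb B Hb Hc Bcl Bcv (ex_intro _ y0 By0)) as [q [Bq [Hmin Huniq]]].
  exists q. split; auto.
  apply Huniq; [apply TB; auto|].
  apply le_eps. intros eta He.
  destruct (phi_P orb (T q) Hb) as [_ P2]. destruct (phi_P orb q Hb) as [P1 _].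
  destruct (P1 (eta/2) ltac:(lra)) as [N HN].
  destruct (P2 (eta/2) ltac:(lra) (S N)) as [n [Hn Hlt]].
  destruct n as [|m]; [lia|].
  specialize (HN m ltac:(lia)).
  pose proof (Hrn _ _ (oA m) Bq). change (orb (S m)) with (T (orb m)) in Hlt. lra.
Qed.

Lemma fejer (A B : X -> Prop) (T : X -> X) (x : nat -> X) (q : X) :
  rel_nonexpansive d A B T -> B q -> T q = q -> (forall n, A (x n)) ->
  (forall n, is_midpoint d (x n) (T (x n)) (x (S n))) ->
  forall n, d (x (S n)) q <= d (x n) q /\ d (T (x n)) q <= d (x n) q.
Proof.
  intros Hrn Bq Tq xA Hx n.
  pose proof (Hrn _ _ (xA n) Bq) as H. rewrite Tq in H.
  pose proof (mid_pt _ _ _ q (Hx n)). split; lra.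
Qed.

Lemma asreg (A B : X -> Prop) (T : X -> X) (x : nat -> X) (q : X) :
  rel_nonexpansive d A B T -> B q -> T q = q -> (forall n, A (x n)) ->
  (forall n, is_midpoint d (x n) (T (x n)) (x (S n))) ->
  Un_cv (fun n => d (x n) (T (x n))) 0.
Proof.
  intros Hrn Bq Tq xA Hx.
  pose proof (fejer A B T x q Hrn Bq Tq xA Hx) as Hf.
  destruct (dec_lim (fun n => d (x n) q)) as [L [HL0 [Hlb Hev]]].
  { intro; apply d_pos. } { intro n; apply Hf. }
  intros eps He. unfold R_dist. 
  destruct (Rlt_le_dec 0 L) as [HLp|HLz].
  - destruct (uc_key L eps HLp He) as [eta [kap [Heta [Hk Hkey]]]].
    destruct (Hev eta Heta) as [N HN]. exists N. intros n Hn.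
    rewrite Rminus_0_r, Rabs_right by (apply Rle_ge, d_pos).
    destruct (Rlt_le_dec (d (x n) (T (x n))) eps) as [|Hge]; [auto|exfalso].
    specialize (HN n Hn). destruct (Hf n) as [_ H2].
    pose proof (Hkey q (x n) (T (x n)) (x (S n)) ltac:(simpl in *; lra) ltac:(simpl in *; lra) Hge (Hx n)).
    specialize (Hlb (S n)). simpl in Hlb. lra.
  - assert (L = 0) by lra. subst L.
    destruct (Hev (eps/2) ltac:(lra)) as [N HN]. exists N. intros n Hn.
    rewrite Rminus_0_r, Rabs_right by (apply Rle_ge, d_pos).
    specialize (HN n Hn). destruct (Hf n) as [_ H2]. simpl in HN.
    pose proof (d_tri (x n) q (T (x n))). rewrite (d_sym q) in H. lra.
Qed.

Lemma cluster_compact (C : X -> Prop) (u : nat -> X) : mcompact_set d C -> (forall n, C (u n)) ->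
  exists c, forall eps, 0 < eps -> forall N, exists n, (N <= n)%nat /\ d (u n) c < eps.
Proof.
  intros Hcomp HC. apply NNPP. intro Hno.
  assert (Hfar : forall c, exists e N, 0 < e /\ forall n, (N <= n)%nat -> e <= d (u n) c).
  { intro c. apply NNPP. intro Hn. apply Hno. exists c. intros eps He N.
    apply NNPP. intro Hn2. apply Hn. exists eps, N. split; auto.
    intros n HnN. destruct (Rle_lt_dec eps (d (u n) c)) as [|Hlt]; auto.
    exfalso. apply Hn2. eauto. }
  set (I := {p : X * R * nat | 0 < snd (fst p) /\
              forall n, (snd p <= n)%nat -> snd (fst p) <= d (u n) (fst (fst p))}).
  set (U := fun (i : I) (y : X) => d (fst (fst (proj1_sig i))) y < snd (fst (proj1_sig i))).
  destruct (Hcomp I U) as [l Hl].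
  - intros i y Hy. unfold U in *.
    exists (snd (fst (proj1_sig i)) - d (fst (fst (proj1_sig i))) y). split; [lra|].
    intros z Hz. pose proof (d_tri (fst (fst (proj1_sig i))) y z). lra.
  - intros y Cy. destruct (Hfar y) as [e [N [He HN]]].
    exists (exist _ (y, e, N) (conj He HN)). unfold U; simpl. rewrite d_xx. exact He.
  - assert (HM : exists M, forall i, List.In i l -> (snd (proj1_sig i) <= M)%nat).
    { clear Hl. induction l as [|i l IH]; [exists 0%nat; intros i []|].
      destruct IH as [M HM]. exists (max M (snd (proj1_sig i))).
      intros j [<-|Hj]; [lia|]. specialize (HM j Hj). lia. }
    destruct HM as [M HM].
    destruct (Hl (u M) (HC M)) as [i [Hi HU]].
    specialize (HM _ Hi). clear Hi.
    destruct i as [[[c e] N] [He HN]]. unfold U in HU; simpl in *.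
    specialize (HN M HM). rewrite d_sym in HN. lra.
Qed.

Lemma phi_const (p z : X) : phi (fun _ => p) z = d p z.
Proof.
  assert (Hb : bnd (fun _ => p)) by (exists p, 0; intro; rewrite d_xx; lra).
  destruct (phi_P _ z Hb) as [P1 P2].
  apply Rle_antisym; apply le_eps; intros eta He.
  - destruct (P2 eta He 0%nat) as [n [_ Hn]]. lra.
  - destruct (P1 eta He) as [N HN]. specialize (HN N (le_n N)). lra.
Qed.

Lemma part2 (A B : X -> Prop) (T : X -> X) (D : R) (x : nat -> X) :
  mcomplete d -> mclosed_set d A -> mclosed_set d B -> convex_set d A -> convex_set d B ->
  noncyclic A B T -> rel_nonexpansive d A B T -> is_dist d A B D ->
  A0_set d A B D (x 0%nat) ->
  (forall n, is_midpoint d (x n) (T (x n)) (x (S n))) ->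
  Un_cv (fun n => d (x n) (T (x n))) 0 ->
  (exists C, mcompact_set d C /\ forall a, A a -> C (T a)) ->
  exists p, seq_converges_to d x p /\ (A p \/ B p) /\ T p = p.
Proof.
  intros Hc Acl Bcl Acv Bcv [TA TB] Hrn [Hdist _] H0 Hx Hcv [C [Hcomp HTC]].
  assert (xA : forall n, A (x n)).
  { induction n; [apply H0|]. exact (mid_convex A _ _ _ Acv IHn (TA _ IHn) (Hx n)). }
  assert (prox : forall n, exists y, B y /\ d (x n) y = D).
  { induction n; [apply H0|]. destruct IHn as [y [By Hy]].
    destruct (mid_ex y (T y)) as [y' Hy'].
    exists y'. split; [exact (mid_convex B _ _ _ Bcv By (TB _ By) Hy')|].
    pose proof (mid_bus _ _ _ _ _ _ (Hx n) Hy').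
    pose proof (Hrn _ _ (xA n) By). pose proof (Hdist _ _ (xA (S n)) (mid_convex B _ _ _ Bcv By (TB _ By) Hy')).
    lra. }
  assert (HD0 : 0 <= D).
  { destruct H0 as [_ [y [_ Hy]]]. rewrite <- Hy. apply d_pos. }
  destruct (cluster_compact C (fun n => T (x n)) Hcomp (fun n => HTC _ (xA n))) as [p Hp0].
  assert (Hp : forall eps, 0 < eps -> forall N, exists n, (N <= n)%nat /\
              d (x n) p < eps /\ d (x n) (T (x n)) < eps).
  { intros eps He N. destruct (Hcv (eps/2) ltac:(lra)) as [N1 HN1].
    destruct (Hp0 (eps/2) ltac:(lra) (max N N1)) as [n [Hn Hd]].
    exists n. specialize (HN1 n ltac:(lia)). unfold R_dist in HN1.
    rewrite Rminus_0_r, Rabs_right in HN1 by (apply Rle_ge, d_pos).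
    pose proof (d_tri (x n) (T (x n)) p). split; [lia|split; lra]. }
  assert (Ap : A p).
  { apply NNPP. intro Hn. destruct (Acl p Hn) as [e [He Hball]].
    destruct (Hp e He 0%nat) as [n [_ [Hn1 _]]]. apply (Hball (x n)); [rewrite d_sym; lra|apply xA]. }
  exists p. split; [|split; [left; exact Ap|]].
  all: destruct (Req_dec D 0) as [HD|HD].
  1,3: assert (xB : forall n, B (x n)) by
         (intro n; destruct (prox n) as [y [By Hy]]; rewrite HD in Hy; now rewrite (d_eq _ _ Hy));
       assert (Bp : B p) by
         (apply NNPP; intro Hn; destruct (Bcl p Hn) as [e [He Hball]];
          destruct (Hp e He 0%nat) as [n [_ [Hn1 _]]]; apply (Hball (x n)); [rewrite d_sym; lra|apply xB]);
       assert (Tp : T p = p) by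
         (apply d_eq, Rle_antisym; [|apply d_pos]; apply le_eps; intros eta He;
          destruct (Hp (eta/3) ltac:(lra) 0%nat) as [n [_ [H1 H2]]];
          pose proof (Hrn _ _ (xA n) Bp); pose proof (d_tri (T p) (T (x n)) p);
          pose proof (d_tri (T (x n)) (x n) p); pose proof (d_sym (T p) (T (x n)));
          pose proof (d_sym (T (x n)) (x n)); lra).
  - intros eps He. destruct (Hp eps He 0%nat) as [n0 [_ [Hn0 _]]]. exists n0. intros n Hn.
    pose proof (fejer A B T x p Hrn Bp Tp xA Hx) as Hf.
    pose proof (mono_dec (fun n => d (x n) p) (fun n => proj1 (Hf n)) n0 n Hn). simpl in H. lra.
  - exact Tp.
  all: assert (HDp : 0 < D) by lra;
    assert (Bne : exists b, B b) by (destruct H0 as [_ [y [By _]]]; eauto);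
    assert (Hbp : bnd (fun _ => p)) by (exists p, 0; intro; rewrite d_xx; lra);
    destruct (acenter (fun _ => p) B Hbp Hc Bcl Bcv Bne) as [q [Bq [Hmin0 Huniq0]]];
    assert (Hmin : forall w, B w -> d p q <= d p w) by
      (intros w Bw; rewrite <- !phi_const; auto);
    assert (Huniq : forall w, B w -> d p w <= d p q -> w = q) by
      (intros w Bw; rewrite <- !phi_const; auto);
    assert (Hpq : d p q = D) by
      (apply Rle_antisym; [|apply Hdist; auto]; apply le_eps; intros eta He;
       destruct (Hp eta He 0%nat) as [n [_ [H1 _]]]; destruct (prox n) as [y [By Hy]];
       pose proof (Hmin y By); pose proof (d_tri p (x n) y); rewrite (d_sym p (x n)) in *; lra);
    assert (Tq : T q = q) by
      (apply Huniq; [apply TB; auto|]; apply le_eps; intros eta He;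
       destruct (Hp (eta/3) ltac:(lra) 0%nat) as [n [_ [H1 H2]]];
       pose proof (Hrn _ _ (xA n) Bq);
       pose proof (d_tri p (x n) (T q)); pose proof (d_tri (x n) (T (x n)) (T q));
       pose proof (d_tri (x n) p q); rewrite (d_sym p (x n)) in *; lra).
  - intros eps He.
    destruct (uc_key D eps HDp He) as [eta [kap [Heta [Hk Hkey]]]].
    pose proof (fejer A B T x q Hrn Bq Tq xA Hx) as Hf.
    destruct (Hp eta Heta 0%nat) as [n0 [_ [Hn0 _]]]. exists n0. intros n Hn.
    pose proof (mono_dec (fun n => d (x n) q) (fun n => proj1 (Hf n)) n0 n Hn) as Hmo. simpl in Hmo.
    pose proof (d_tri (x n0) p q).
    destruct (Rlt_le_dec (d (x n) p) eps) as [|Hge]; [auto|exfalso].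
    destruct (mid_ex (x n) p) as [m Hm'].
    pose proof (Hkey q (x n) p m ltac:(lra) ltac:(lra) Hge Hm').
    pose proof (Hdist m q (mid_convex A _ _ _ Acv (xA n) Ap Hm') Bq). lra.
  - apply d_eq. destruct (Req_dec (d (T p) p) 0) as [|Hne]; [auto|exfalso].
    set (eps := d p (T p)).
    assert (He : 0 < eps) by (unfold eps; rewrite d_sym; pose proof (d_pos (T p) p); lra).
    destruct (uc_key D eps HDp He) as [eta [kap [Heta [Hk Hkey]]]].
    destruct (mid_ex p (T p)) as [m Hm'].
    pose proof (Hrn _ _ Ap Bq). rewrite Tq in H.
    pose proof (Hkey q p (T p) m ltac:(lra) ltac:(lra) (Rle_refl _) Hm').
    pose proof (Hdist m q (mid_convex A _ _ _ Acv Ap (TA _ Ap) Hm') Bq). lra.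
Qed.

End Metric.

Theorem mainTheorem7 (X : Type) (d : X -> X -> R)
  (delta : R -> R -> R)
  (A B : X -> Prop) (T : X -> X) (D : R) (x : nat -> X) :
  is_metric d -> mcomplete d -> geodesic_space d -> busemann_convex d ->
  modulus_uc d delta -> (modulus_monotone delta \/ modulus_lsc_right delta) ->
  mclosed_set d A -> mclosed_set d B -> convex_set d A -> convex_set d B ->
  mbounded_set d B ->
  noncyclic A B T -> rel_nonexpansive d A B T ->
  is_dist d A B D ->
  A0_set d A B D (x 0%nat) ->
  (forall n, is_midpoint d (x n) (T (x n)) (x (S n))) ->
  Un_cv (fun n => d (x n) (T (x n))) 0 /\
  ((exists C, mcompact_set d C /\ forall a, A a -> C (T a)) ->
   exists p, seq_converges_to d x p /\ (A p \/ B p) /\ T p = p).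
Proof.
  intros Hm Hc Hg Hbus Huc Hmod Acl Bcl Acv Bcv Bbd Hnc Hrn Hdist H0 Hx.
  assert (xA : forall n, A (x n)).
  { induction n; [apply H0|].
    exact (mid_convex X d Hm delta Hg Huc A _ _ _ Acv IHn (proj1 Hnc _ IHn) (Hx n)). }
  assert (Bne : exists b, B b) by (destruct H0 as [_ [y [By _]]]; eauto).
  destruct (fixB X d Hm delta Hg Huc Hmod A B T (x 0%nat) Hc Bcl Bcv Bbd Hnc Hrn (xA 0%nat) Bne)
    as [q [Bq Tq]].
  assert (Hcv : Un_cv (fun n => d (x n) (T (x n))) 0)
    by exact (asreg X d Hm delta Hg Huc Hbus Hmod A B T x q Hrn Bq Tq xA Hx).
  split; [exact Hcv|].
  exact (part2 X d Hm delta Hg Huc Hbus Hmod A B T D x Hc Acl Bcl Acv Bcv Hnc Hrn Hdist H0 Hx Hcv).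
Qed.
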